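(* In the setting below, let $\Delta=\{x\in\mathbb{R}[T_PM,T_PM]: A(v)x(v)=0\text{ for all }v\in T_PM\}$. Then: \begin{enumerate} \item if $x\in\mathbb{R}[T_PM,T_PM]$ and $f\in\mathbb{R}[T_PM,\mathbb{R}]$ is nonzero with $f\cdot x\in\Delta$, then $x\in\Delta$; \item if $T:T_PM\to T_PM$ is the differential at $P$ of a local isometry of $M$ fixing $P$ and $x\in\Delta$, then the polynomial map $Tx$ defined by $(Tx)(v)=T\,x(T^{-1}v)$ also lies in $\Delta$. \end{enumerate}
   Context: $M$ is a locally isotropic pseudo-Riemannian manifold of signature $(p,q)$, $q>p\ge2$ (locally isotropic: for every $P$ and nonzero $x,y\in T_PM$ with $(x,x)=(y,y)$ some local isometry fixing $P$ has differential mapping $x$ to $y$), $P\in M$, $n\ge1$, and $S:T_PM\to\mathrm{Hom}(T_PM,T_PM)$, $S\not\equiv0$, satisfies: each $S(v)$ self-adjoint; $S(v)v=0$; $S(-v)=-S(v)$; $S(Tv)=T\circ S(v)\circ T^{-1}$ for differentials $T$ of local isometries fixing $P$; and $S$ is a homogeneous polynomial of degree $2n+1$ in the coordinates of $v$. The spectrum of $S(v)$ for unit timelike $v$ is $\{0,\pm\lambda_1,\dots,\pm\lambda_l\}$, $\lambda_i>0$, $l\ge1$; $\sigma_k(\lambda)$ is the $k$-th elementary symmetric function of $\lambda_1^2,\dots,\lambda_l^2$; and $A(v)=S(v)^{2l}+\sum_{k=1}^l\sigma_k(\lambda)(v,v)^{(2n+1)k}S(v)^{2l-2k}$. $\mathbb{R}[T_PM,W]$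 denotes polynomial maps $T_PM\to W$. *)

(* Defs.v *)
(* R : rcfType (the paper's field is the reals, which is an
   rcfType); the tangent space T_P M is modelled as column vectors 'cV[R]_(p+q). *)
From HB Require Import structures.
From mathcomp Require Import all_boot all_order all_algebra.
From mathcomp Require Import mpoly.
From mathcomp Require Import complex.
Set Implicit Arguments.
Unset Strict Implicit.
Unset Printing Implicit Defensive.
Import Order.TTheory GRing.Theory Num.Theory.
Local Open Scope ring_scope.

Section Defs.
Variables (R : rcfType) (p q : nat).
Local Notation N := (p + q)%N.
Local Notation V := 'cV[R]_N.

(* Gram matrix of the metric on T_P M in an orthonormal basis:
   p entries -1 (timelike directions), q entries +1. *)
Definition gram : 'M[R]_N :=
  diag_mx (\row_(i < N) (if (i < p)%N then -1 else 1)).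

Definition ip (x y : V) : R := (x^T *m gram *m y) 0 0.

Definition polyfun (f : V -> R) : Prop :=
  exists P : {mpoly R[N]}, forall v, f v = P.@[fun k => v k 0].

Definition polymap (x : V -> V) : Prop :=
  exists P : 'I_N -> {mpoly R[N]}, forall v i, x v i 0 = (P i).@[fun k => v k 0].

Definition homog_polymx (d : nat) (S : V -> 'M[R]_N) : Prop :=
  exists P : 'I_N -> 'I_N -> {mpoly R[N]},
    (forall i j, P i j \is d.-homog) /\
    forall v i j, S v i j = (P i j).@[fun k => v k 0].

(* The set G of differentials at P of local isometries of M fixing P:
   a group of linear isometries of (T_PM, ( , )) which, by local isotropy
   at P, acts transitively on each set {x <> 0 : (x,x) = c}. *)
Definition isometry_group (G : 'M[R]_N -> Prop) : Prop :=
  [/\ G 1%:M,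
      (forall T, G T -> T \in unitmx /\ forall x y, ip (T *m x) (T *m y) = ip x y),
      (forall T1 T2, G T1 -> G T2 -> G (T1 *m T2)),
      (forall T, G T -> G (invmx T)) &
      (forall x y : V, x != 0 -> y != 0 -> ip x x = ip y y ->
         exists2 T, G T & T *m x = y)].

Definition cspec (B : 'M[R]_N) (z : R[i]) : Prop :=
  eigenvalue (map_mx (fun a : R => Complex a 0) B) z.

Definition sigma (l : nat) (lam : 'I_l -> R) (k : nat) : R :=
  \sum_(I : {set 'I_l} | #|I| == k) \prod_(i in I) lam i ^+ 2.

Definition Aop (n l : nat) (lam : 'I_l -> R) (S : V -> 'M[R]_N) (v : V)
  : 'M[R]_N :=
  S v ^+ (2 * l) +
  \sum_(1 <= k < l.+1)
     (sigma lam k * ip v v ^+ ((2 * n + 1) * k)) *: S v ^+ (2 * l - 2 * k).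

Definition Delta (n l : nat) (lam : 'I_l -> R) (S : V -> 'M[R]_N)
  (x : V -> V) : Prop :=
  polymap x /\ forall v, Aop n lam S v *m x v = 0.

End Defs.

(* Main.v *)
Require Import Defs.
From HB Require Import structures.
From mathcomp Require Import all_boot all_order all_algebra.
From mathcomp Require Import mpoly.
From mathcomp Require Import complex.
Import Order.TTheory GRing.Theory Num.Theory.
Local Open Scope ring_scope.
Set Implicit Arguments.

Definition AopG (K : comPzRingType) (N n l : nat) (sig : nat -> K)
  (Sm : 'M[K]_N) (iv : K) : 'M[K]_N :=
  Sm ^+ (2 * l) +
  \sum_(1 <= k < l.+1) (sig k * iv ^+ ((2 * n + 1) * k)) *: Sm ^+ (2 * l - 2 * k).

Arguments AopG {K N}.
Lemma AopE (R : rcfType) (p q n l : nat) (lam : 'I_l -> R) (S : 'cV[R]_(p + q) -> 'M[R]_(p + q)) v :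
  Aop n lam S v = AopG n l (sigma lam) (S v) (ip v v).
Proof. by []. Qed.

Lemma map_mxX (K K' : comPzRingType) (f : {rmorphism K -> K'}) N (M : 'M[K]_N) k :
  map_mx f (M ^+ k) = (map_mx f M) ^+ k.
Proof.
elim: k => [|k IH]; first by rewrite !expr0 map_mx1.
by rewrite !exprS -!mulmxE map_mxM IH.
Qed.

Lemma map_mx_sum (K K' : comPzRingType) (f : {rmorphism K -> K'}) N (r : seq nat) (F : nat -> 'M[K]_N) :
  map_mx f (\sum_(k <- r) F k) = \sum_(k <- r) map_mx f (F k).
Proof.
elim: r => [|a r IH]; first by rewrite !big_nil map_mx0.
by rewrite !big_cons map_mxD IH.
Qed.

Lemma map_AopG (K K' : comPzRingType) (f : {rmorphism K -> K'}) N n l sig sig' (M : 'M[K]_N) iv :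
  (forall k, f (sig k) = sig' k) ->
  map_mx f (AopG n l sig M iv) = AopG n l sig' (map_mx f M) (f iv).
Proof.
move=> Hs; rewrite /AopG map_mxD map_mxX map_mx_sum; congr (_ + _).
by apply: eq_bigr => k _; rewrite map_mxZ rmorphM rmorphXn map_mxX Hs.
Qed.

Lemma conjX (K : comUnitRingType) N (T M : 'M[K]_N) k : T \in unitmx ->
  (T *m M *m invmx T) ^+ k = T *m M ^+ k *m invmx T.
Proof.
move=> Tu; elim: k => [|k IH]; first by rewrite !expr0 mulmx1 mulmxV.
rewrite !exprS IH -!mulmxE !mulmxA; congr (_ *m _).
by rewrite -[T *m M *m invmx T *m T]mulmxA mulVmx // mulmx1.
Qed.

Lemma conj_AopG (K : comUnitRingType) N n l sig (T M : 'M[K]_N) iv : T \in unitmx ->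
  AopG n l sig (T *m M *m invmx T) iv = T *m AopG n l sig M iv *m invmx T.
Proof.
move=> Tu; rewrite /AopG conjX // mulmxDr mulmxDl; congr (_ + _).
rewrite mulmx_sumr mulmx_suml; apply: eq_bigr => k _.
by rewrite conjX // scalemxAl scalemxAr.
Qed.

Lemma poly_all_roots (R : numFieldType) (P : {poly R}) : (forall t, P.[t] = 0) -> P = 0.
Proof.
move=> H; apply/eqP; apply/contraT => nz.
have := max_poly_roots nz (rs := [seq k%:R | k <- iota 0 (size P)]).
rewrite size_map size_iota ltnn; apply.
  by apply/allP => x _; apply/rootP.
rewrite map_inj_uniq ?iota_uniq //.
by move=> a b /eqP; rewrite eqr_nat => /eqP.
Qed.

Definition hline (R : rcfType) N (v u : 'cV[R]_N) (i : 'I_N) : {poly R} :=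
  (v i 0)%:P + 'X * (u i 0)%:P.

Arguments hline {R N}.
Lemma mmap_line (R : rcfType) N (v u : 'cV[R]_N) (P : {mpoly R[N]}) t :
  (mmap polyC (hline v u) P).[t] = P.@[fun k => (v + t *: u) k 0].
Proof.
rewrite /meval /mmap horner_sum; apply: eq_bigr => m _.
rewrite hornerCM /mmap1 horner_prod /=; congr (_ * _); apply: eq_bigr => i _.
by rewrite horner_exp hornerD hornerC mulrC hornerCM hornerX !mxE [u i 0 * t]mulrC.
Qed.

Lemma Xline (R : rcfType) N (v u : 'cV[R]_N) t :
  map_mx (horner_eval t) (\col_i hline v u i) = v + t *: u.
Proof.
apply/matrixP => i j; rewrite !mxE (ord1 j) horner_evalE /hline.
by rewrite hornerD hornerC mulrC hornerCM hornerX [u i 0 * t]mulrC.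
Qed.

Lemma ip_line (R : rcfType) p q (v u : 'cV[R]_(p + q)) t :
  ip (v + t *: u) (v + t *: u) =
  horner_eval t (((\col_i hline v u i)^T *m map_mx polyC (gram R p q) *m (\col_i hline v u i)) 0 0).
Proof.
transitivity ((map_mx (horner_eval t) ((\col_i hline v u i)^T *m map_mx polyC (gram R p q) *m (\col_i hline v u i))) 0 0); last by rewrite mxE.
have Hg : map_mx (horner_eval t) (map_mx polyC (gram R p q)) = gram R p q.
  by apply/matrixP => i j; rewrite !mxE horner_evalE hornerC.
by rewrite !map_mxM -map_trmx Xline Hg.
Qed.

Theorem lemma5p4 (R : rcfType) (p q : nat) (G : 'M[R]_(p + q) -> Prop)
  (n l : nat) (lam : 'I_l -> R) (S : 'cV[R]_(p + q) -> 'M[R]_(p + q)) :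
  (2 <= p)%N -> (p < q)%N -> (1 <= n)%N -> (1 <= l)%N ->
  isometry_group G ->
  (exists v, S v != 0) ->
  (forall v x y, ip (S v *m x) y = ip x (S v *m y)) ->
  (forall v, S v *m v = 0) ->
  (forall v, S (- v) = - S v) ->
  (forall T v, G T -> S (T *m v) = T *m S v *m invmx T) ->
  homog_polymx (2 * n + 1) S ->
  (forall i, 0 < lam i) -> injective lam ->
  (forall v, ip v v = -1 -> forall z : R[i],
     cspec (S v) z <-> (z = 0 \/ exists i, z = Complex (lam i) 0 \/ z = Complex (- lam i) 0)) ->
  (forall (x : 'cV[R]_(p + q) -> 'cV[R]_(p + q)) (f : 'cV[R]_(p + q) -> R),
     polymap x -> polyfun f -> (exists v, f v != 0) ->
     Delta n lam S (fun v => f v *: x v) -> Delta n lam S x)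
  /\
  (forall (T : 'M[R]_(p + q)) (x : 'cV[R]_(p + q) -> 'cV[R]_(p + q)),
     G T -> Delta n lam S x ->
     Delta n lam S (fun v => T *m x (invmx T *m v))).
Proof.
move=> _ _ _ _ HG _ _ _ _ HST [PS [_ HS]] _ _ _; split.
  move=> x f [Px HPx] [Pf HPf] [w fw] [_ HD]; split; first by exists Px.
  move=> v.
  suff H : forall i, (Aop n lam S v *m x v) i 0 = 0.
    by apply/matrixP => i j; rewrite (ord1 j) H mxE.
  move=> i; set u := w - v.
  pose L := mmap polyC (hline v u).
  pose Sp := \matrix_(a, b) L (PS a b).
  pose Xp := \col_a hline v u a.
  pose ipP := (Xp^T *m map_mx polyC (gram R p q) *m Xp) 0 0.
  pose Xx := \col_a L (Px a).
  pose g := (AopG n l (fun k => (sigma lam k)%:P) Sp ipP *m Xx) i 0.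
  have Hg t : g.[t] = (Aop n lam S (v + t *: u) *m x (v + t *: u)) i 0.
    transitivity ((map_mx (horner_eval t) (AopG n l (fun k => (sigma lam k)%:P) Sp ipP *m Xx)) i 0).
      by rewrite mxE.
    have eS : map_mx (horner_eval t) Sp = S (v + t *: u).
      by apply/matrixP => a b; rewrite !mxE horner_evalE mmap_line HS.
    have eX : map_mx (horner_eval t) Xx = x (v + t *: u).
      by apply/matrixP => a b; rewrite !mxE (ord1 b) horner_evalE mmap_line HPx.
    have hs : forall k, horner_eval t (sigma lam k)%:P = sigma lam k.
      by move=> k; rewrite horner_evalE hornerC.
    rewrite map_mxM (map_AopG _ _ _ _ _ _ _ hs).
    by rewrite eS eX AopE ip_line.
  have HF t : (L Pf).[t] = f (v + t *: u) by rewrite mmap_line HPf.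
  have Hprod : L Pf * g = 0.
    apply: poly_all_roots => t; rewrite hornerM HF Hg.
    have := HD (v + t *: u); move/matrixP/(_ i 0); rewrite -scalemxAr.
    set M := (_ *m _); by rewrite !mxE.
  have FN : L Pf != 0.
    apply/eqP => E; move: fw; have := HF 1; rewrite E horner0 scale1r /u addrC subrK.
    by move=> <-; rewrite eqxx.
  move: Hprod => /eqP; rewrite mulf_eq0 (negbTE FN) /= => /eqP g0.
  by have := Hg 0; rewrite g0 horner0 scale0r addr0 => <-.
move=> T x GT [[Px HPx] HD].
have [_ Giso _ _ _] := HG.
have [Tu Tip] := Giso T GT.
split.
  pose lq := [tuple \sum_(b < p + q) invmx T a b *: 'X_b | a < p + q].
  exists (fun a => \sum_(b < p + q) T a b *: comp_mpoly lq (Px b)).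
  move=> v a; rewrite mxE raddf_sum; apply: eq_bigr => b _.
  rewrite /= mevalZ comp_mpoly_meval HPx; congr (_ * _); apply: meval_eq => k.
  rewrite tnth_mktuple raddf_sum mxE; apply: eq_bigr => c _.
  by rewrite /= mevalZ mevalXU.
move=> v; rewrite -{1}(mulKVmx Tu v); set w := invmx T *m v.
rewrite AopE HST // Tip conj_AopG // -AopE.
by rewrite !mulmxA -[_ *m invmx T *m T]mulmxA mulVmx // mulmx1 -mulmxA HD mulmx0.
Qed.
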